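(* Fix a constant $p>0$. Let $q(n,\ell)$ be any function with $q(n,\ell)/(\ell n)\to 0$ as $n,\ell\to\infty$ (i.e., for every $\varepsilon>0$ there is $N$ such that $q(n,\ell)\le \varepsilon \ell n$ whenever $n,\ell\ge N$). Then there is no randomized algorithm that, for every tournament $T$ on $n$ vertices whose champions lose $\ell$ matches, performs at most $q(n,\ell)$ arc lookups and outputs a champion of $T$ with probability at least $p$.
   Context: A tournament $T=(V,E)$ is an oriented complete graph: for every pair of distinct vertices $u,v$ exactly one of $(u,v)$, $(v,u)$ is in $E$; $(u,v)\in E$ means ''$u$ beats $v$''. An arc lookup is a query that, given distinct $u,v$, reveals the orientation of the arc between them. A champion (Copeland winner) is a vertex of maximum out-degree, i.e., one losing the fewest matches; $\ell$ denotes the number of matches it loses. A randomized algorithm may use internal random coins; the probability is over these coins, and the success guarantee must hold for every input tournament. *)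

(* Defs.v *)
From HB Require Import structures.
From mathcomp Require Import all_boot all_order all_algebra.
From mathcomp Require Import reals.
Set Implicit Arguments. Unset Strict Implicit. Unset Printing Implicit Defensive.
Import Order.TTheory GRing.Theory Num.Theory.

(* A tournament on vertex set 'I_n: [T u v] means "u beats v".
   Irreflexive, and for distinct u v exactly one of T u v, T v u holds. *)
Definition is_tournament (n : nat) (T : rel 'I_n) : Prop :=
  (forall u, ~~ T u u) /\ (forall u v, u != v -> T u v = ~~ T v u).

Definition outdeg (n : nat) (T : rel 'I_n) (v : 'I_n) : nat :=
  #|[pred u | T v u]|.

Definition champion (n : nat) (T : rel 'I_n) (v : 'I_n) : bool :=
  [forall u, outdeg T u <= outdeg T v].

(* number of matches lost by a champion: (n-1) - maximum out-degree *)
Definition ell (n : nat) (T : rel 'I_n) : nat :=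
  (n.-1 - \max_(v : 'I_n) outdeg T v)%N.

(* Deterministic arc-lookup algorithm = decision tree.
   [Query u v l r] looks up the arc between u and v and continues with l if
   u beats v, with r otherwise; [Leaf v] outputs v. *)
Inductive dtree (n : nat) : Type :=
| Leaf of 'I_n
| Query of 'I_n & 'I_n & dtree n & dtree n.

Fixpoint run (n : nat) (t : dtree n) (T : rel 'I_n) : 'I_n * nat :=
  match t with
  | Leaf v => (v, 0%N)
  | Query u v l r =>
      let res := run (if T u v then l else r) T in (res.1, res.2.+1)
  end.

(* Randomized algorithm on n vertices: a probability distribution (finitely
   supported) over deterministic decision trees (the internal coins select
   the tree). *)
Record rand_alg (R : realType) (n : nat) := RandAlg {
  ra_k : nat;
  ra_w : 'I_ra_k -> R;
  ra_tree : 'I_ra_k -> dtree n;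
  ra_w_ge0 : forall i, (0 <= ra_w i)%R;
  ra_w_sum : (\sum_(i < ra_k) ra_w i = 1)%R
}.
Arguments ra_k {R n} r.
Arguments ra_w {R n} r i.
Arguments ra_tree {R n} r i.

Definition succ_prob (R : realType) (n : nat) (A : rand_alg R n) (T : rel 'I_n) : R :=
  (\sum_(i < ra_k A | champion T (run (ra_tree A i) T).1) ra_w A i)%R.

Definition lookups_le (R : realType) (n : nat) (A : rand_alg R n) (T : rel 'I_n) (b : R) : Prop :=
  forall i : 'I_(ra_k A), ((run (ra_tree A i) T).2%:R <= b)%R.

(* Main.v *)
Require Import Defs.
From HB Require Import structures.
From mathcomp Require Import all_boot all_order all_algebra.
From mathcomp Require Import reals.
From mathcomp Require Import zify ring lra.
Import Order.TTheory GRing.Theory Num.Theory.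
Set Implicit Arguments. Unset Strict Implicit. Unset Printing Implicit Defensive.

Definition dst (N u v : nat) : nat := if u <= v then v - u else v + N - u.
Definition Bt (m : nat) : rel 'I_(m+m).+1 :=
  fun u v => (0 < dst (m+m).+1 u v <= m).
Definition svn (m i j : nat) : nat :=
  if i + j.+1 < (m+m).+1 then i + j.+1 else i + j.+1 - (m+m).+1.
Definition sv (m : nat) (i : 'I_(m+m).+1) (j : 'I_m) : 'I_(m+m).+1 :=
  inord (svn m i j).
Definition Tf (m : nat) (e : 'I_(m+m).+1 * 'I_m) : rel 'I_(m+m).+1 :=
  fun u v => if (u == e.1) && (v == sv e.1 e.2) then false
             else if (u == sv e.1 e.2) && (v == e.1) then true else @Bt m u v.

Lemma sv_val m (i : 'I_(m+m).+1) (j : 'I_m) : (sv i j : nat) = svn m i j.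
Proof.
rewrite /sv inordK //; rewrite /svn; have := ltn_ord i; have := ltn_ord j.
case: ifP => ? ; lia.
Qed.

Lemma Bt_irr m u : ~~ @Bt m u u.
Proof. by rewrite /Bt /dst leqnn subnn. Qed.

Lemma Bt_anti m (u v : 'I_(m+m).+1) : u != v -> @Bt m u v = ~~ @Bt m v u.
Proof.
move=> Huv0; have Huv : (u : nat) <> v by move=> E; move/eqP: Huv0; apply; apply: val_inj.
have := ltn_ord u; have := ltn_ord v.
rewrite /Bt /dst; do 2 case: ifP => ?; case: (0 < _ <= m) /idP; case: (0 < _ <= m) /idP; lia.
Qed.

Lemma sv_neq m (i : 'I_(m+m).+1) (j : 'I_m) : i != sv i j.
Proof.
apply/eqP => E; have := congr1 val E; rewrite /= sv_val /svn; have := ltn_ord i; have := ltn_ord j.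
case: ifP => ???? ; lia.
Qed.

Lemma Bt_isv m (i : 'I_(m+m).+1) (j : 'I_m) : @Bt m i (sv i j).
Proof.
rewrite /Bt /dst sv_val /svn; have := ltn_ord i; have := ltn_ord j.
move=> ??; case: (ltnP (i + j.+1) (m+m).+1) => ?; case: ifP => ?; lia.
Qed.

Lemma Tf_tour m e : is_tournament (Tf (m:=m) e).
Proof.
case: e => i j; split.
  move=> u; rewrite /Tf /=.
  case: (eqVneq u i) => [->|_]; first by rewrite (negbTE (sv_neq i j)) /= Bt_irr.
  by rewrite /= andbF Bt_irr.
move=> u v Huv; rewrite /Tf /=.
have hs := sv_neq i j; have hb := Bt_isv i j.
case: (eqVneq u i) => [Eu|Nu]; case: (eqVneq v i) => [Ev|Nv];
  case: (eqVneq u (sv i j)) => [Es|Ns]; case: (eqVneq v (sv i j)) => [Fs|Gs] //=;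
  subst => //=; try by rewrite eqxx in Huv.
all: by rewrite Bt_anti.
Qed.
Lemma dst_lt m (v u : 'I_(m+m).+1) : dst (m+m).+1 v u < (m+m).+1.
Proof. rewrite /dst; have := ltn_ord u; have := ltn_ord v; case: ifP => ?; lia. Qed.

Lemma card_X m : #|[set k : 'I_(m+m).+1 | 0 < k <= m]| = m.
Proof.
have -> : [set k : 'I_(m+m).+1 | 0 < k <= m] = [set (@inord (m+m) k.+1) | k : 'I_m].
  apply/setP => k; rewrite inE; apply/idP/imsetP.
    move=> hk; have hk' : k.-1 < m by lia.
    exists (Ordinal hk') => //; apply: val_inj; rewrite /= inordK; lia.
  case=> k' _ ->; rewrite inordK; have := ltn_ord k'; lia.
rewrite card_imset ?card_ord // => a b /(congr1 val); rewrite /= !inordK.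
  by move=> [] /val_inj.
all: have := ltn_ord a; have := ltn_ord b; lia.
Qed.

Lemma outdeg_Bt m (v : 'I_(m+m).+1) : #|[pred u | @Bt m v u]| = m.
Proof.
pose g (u : 'I_(m+m).+1) : 'I_(m+m).+1 := inord (dst (m+m).+1 v u).
have ginj : injective g.
  move=> a b /(congr1 val); rewrite /g /= !inordK ?dst_lt // => E; apply: ord_inj.
  move: E; rewrite /dst; have := ltn_ord a; have := ltn_ord b; have := ltn_ord v.
  case: ifP => ?; case: ifP => ?; lia.
apply: etrans (card_X m); rewrite -(card_preimset _ ginj); apply: eq_card => u.
by rewrite !inE /g inordK ?dst_lt.
Qed.

Lemma outdeg_Tf m (e : 'I_(m+m).+1 * 'I_m) v :
  outdeg (Tf e) v = if v == e.1 then m.-1 else if v == sv e.1 e.2 then m.+1 else m.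
Proof.
case: e => i j /=; rewrite /outdeg.
have hs := sv_neq i j; have hb := Bt_isv i j.
have hb' : ~~ @Bt m (sv i j) i by rewrite -Bt_anti // eq_sym.
case: (eqVneq v i) => [->|Nv].
  have E := cardD1 (sv i j) [pred u | @Bt m i u]; rewrite outdeg_Bt inE hb add1n in E.
  suff -> : #|[pred u | Tf (i, j) i u]| = #|[predD1 [pred u | @Bt m i u] & sv i j]| by rewrite [in RHS]E.
  apply: eq_card => u; rewrite !inE /Tf /= eqxx /=.
  by case: (eqVneq u (sv i j)) => //= _; rewrite (negbTE hs).
case: (eqVneq v (sv i j)) => [->|Ns].
  have E := cardU1 i [pred u | @Bt m (sv i j) u]; rewrite outdeg_Bt inE hb' add1n in E.

  suff -> : #|[pred u | Tf (i, j) (sv i j) u]| = #|[predU1 i & [pred u | @Bt m (sv i j) u]]| by exact: E.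
  apply: eq_card => u; rewrite !inE /Tf /= eqxx /= eq_sym (negbTE hs) /=.
  by case: (eqVneq u i).
apply: etrans (outdeg_Bt v); apply: eq_card => u; rewrite !inE /Tf /=.
by rewrite (negbTE Nv) (negbTE Ns).
Qed.

Lemma maxdeg_Tf m (e : 'I_(m+m).+1 * 'I_m) :
  \max_(v : 'I_(m+m).+1) outdeg (Tf e) v = m.+1.
Proof.
apply/eqP; rewrite eqn_leq; apply/andP; split.
  apply/bigmax_leqP => v _; rewrite outdeg_Tf; case: ifP => _; first lia.
  by case: ifP.
have := @leq_bigmax _ (fun v => outdeg (Tf e) v) (sv e.1 e.2).
by rewrite outdeg_Tf eq_sym (negbTE (sv_neq _ _)) eqxx.
Qed.

Lemma ell_Tf m (e : 'I_(m+m).+1 * 'I_m) : ell (Tf e) = m.-1.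
Proof. rewrite /ell maxdeg_Tf; have := ltn_ord e.2; lia. Qed.

Lemma champ_Tf m (e : 'I_(m+m).+1 * 'I_m) w : champion (Tf e) w -> w = sv e.1 e.2.
Proof.
move=> /forallP /(_ (sv e.1 e.2)); rewrite !outdeg_Tf eq_sym (negbTE (sv_neq _ _)) eqxx.
case: ifP => _; first lia.
by case: ifP => [/eqP|_] //; lia.
Qed.

Fixpoint qpath n (t : dtree n) (T : rel 'I_n) : seq ('I_n * 'I_n) :=
  match t with
  | Leaf _ => [::]
  | Query u v l r => (u, v) :: qpath (if T u v then l else r) T
  end.

Lemma run_agree n (t : dtree n) (T B : rel 'I_n) k :
  (run t T).2 <= k -> (forall u v, (u, v) \in take k (qpath t B) -> T u v = B u v) ->
  run t T = run t B.
Proof.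
elim: t k => [w|u v l IHl r IHr] k //=.
case: k => [|k] //= hk H.
have E : T u v = B u v by apply: H; rewrite inE eqxx.
have H' : forall a b, (a, b) \in take k (qpath (if B u v then l else r) B) -> T a b = B a b.
  by move=> a b hab; apply: H; rewrite inE hab orbT.
move: hk H'; rewrite E ltnS; case: (B u v) => hk H'.
  by rewrite (IHl k).
by rewrite (IHr k).
Qed.

Lemma f_inj m : injective (fun e : 'I_(m+m).+1 * 'I_m => (e.1, sv e.1 e.2)).
Proof.
move=> [i j] [i' j'] /= [E1 E2]; subst i'; congr pair; apply: ord_inj.
move/(congr1 (@nat_of_ord _)): E2; rewrite !sv_val /svn.
have := ltn_ord i; have := ltn_ord j; have := ltn_ord j'.
move=> ???; case: (ltnP (i + j.+1) (m+m).+1) => ?; case: (ltnP (i + j'.+1) (m+m).+1) => ?; lia.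
Qed.

Lemma count_tree m (t : dtree (m+m).+1) :
  #|[set e : 'I_(m+m).+1 * 'I_m | champion (Tf e) (run t (Tf e)).1]|
    <= (\max_(e : 'I_(m+m).+1 * 'I_m) (run t (Tf e)).2).*2 + (m+m).+1.
Proof.
set K := \max_(e : _) _.
pose f := fun e : 'I_(m+m).+1 * 'I_m => (e.1, sv e.1 e.2).
pose L := take K (qpath t (@Bt m)).
pose L' := L ++ map (fun x => (x.2, x.1)) L.
pose X := [set x | x \in L'] :|: setX [set: 'I_(m+m).+1] [set (run t (@Bt m)).1].
have sub : [set e | champion (Tf e) (run t (Tf e)).1] \subset f @^-1: X.
  apply/subsetP => e; rewrite !inE => he.
  case hL: (f e \in L'); first by apply/orP; left.
  apply/orP; right.
  have hr : run t (Tf e) = run t (@Bt m).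
    apply: run_agree; first by rewrite /K; apply: (@leq_bigmax _ (fun e => (run t (Tf e)).2)).
    move=> u v huv; rewrite /Tf.
    have h1 : ~~ ((u == e.1) && (v == sv e.1 e.2)).
      apply/negP => /andP [/eqP Eu /eqP Ev]; move: hL; rewrite /f /L' mem_cat.
      by rewrite -Ev -Eu huv.
    have h2 : ~~ ((u == sv e.1 e.2) && (v == e.1)).
      apply/negP => /andP [/eqP Eu /eqP Ev]; move: hL; rewrite /f /L' mem_cat.
      have := map_f (fun x => (x.2, x.1)) huv => /= hm.
      by rewrite -Eu -Ev hm orbT.
    by rewrite (negbTE h1) (negbTE h2).
  rewrite hr in he; have := champ_Tf he => ->.
  by rewrite /f /= eqxx.
apply: leq_trans (subset_leq_card sub) _.
rewrite -(card_imset _ (@f_inj m)).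
apply: leq_trans (subset_leq_card (_ : _ \subset X)) _.
  by apply/subsetP => y /imsetP [x]; rewrite inE => hx ->.
apply: leq_trans (leq_card_setU _ _) _.
rewrite cardsX cards1 cardsT card_ord muln1 leq_add2r.
rewrite cardsE; apply: leq_trans (card_size _) _.
by rewrite /L' size_cat size_map -addnn size_take_min leq_add // geq_minl.
Qed.

Local Open Scope ring_scope.

Lemma sum_cond_const (R : realType) (I : finType) (c : pred I) (x : R) :
  \sum_(e : I) (if c e then x else 0) = x * (#|[set e | c e]|)%:R.
Proof.
rewrite -big_mkcond /= cardsE mulr_natr -sumr_const.
by apply: eq_bigl => e.
Qed.

Theorem theorem2 (R : realType) (p : R) (hp : 0 < p) (q : nat -> nat -> R)
  (hq : forall eps : R, 0 < eps -> exists N : nat, forall n l : nat,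
          (N <= n)%N -> (N <= l)%N -> q n l <= eps * l%:R * n%:R) :
  ~ exists A : forall n : nat, rand_alg R n.+1,
      forall (n : nat) (T : rel 'I_n.+1), is_tournament T ->
        lookups_le (A n) T (q n.+1 (ell T)) /\ p <= succ_prob (A n) T.
Proof.
move=> [A HA].
have hp4 : 0 < p / 4 by rewrite divr_gt0.
have [N0 HN] := hq _ hp4.
pose m := (N0 + 2 + Num.Def.archi_bound (2 / p))%N.
have hm : 2 / p < m%:R.
  apply: lt_le_trans (archi_boundP _) _; first by rewrite divr_ge0 // ltW.
  by rewrite ler_nat /m leq_addl.
have m0 : (0 < m)%N by rewrite /m; lia.
pose n := (m + m)%N.
pose Q := q n.+1 m.-1.
have HQ : Q <= p / 4 * m%:R * n.+1%:R.
  apply: le_trans (HN n.+1 m.-1 _ _) _; try (rewrite /n /m; lia).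
  apply: ler_wpM2r; first by rewrite ler0n.
  apply: ler_wpM2l; first exact: ltW.
  rewrite ler_nat; lia.
have HA' : forall e : 'I_(m+m).+1 * 'I_m,
    lookups_le (A n) (Tf e) Q /\ p <= succ_prob (A n) (Tf e).
  move=> e; have := HA n (Tf e) (Tf_tour e); by rewrite ell_Tf.
pose W := ra_w (A n).
pose c (i : 'I_(ra_k (A n))) (e : 'I_(m+m).+1 * 'I_m) :=
  champion (Tf e) (run (ra_tree (A n) i) (Tf e)).1.
have cardE : #|{: 'I_(m+m).+1 * 'I_m}| = (n.+1 * m)%N by rewrite card_prod !card_ord.
have HK : forall i, (\max_(e : 'I_(m+m).+1 * 'I_m) (run (ra_tree (A n) i) (Tf e)).2)%:R <= Q.
  move=> i.
  have hpos : (0 < #|{: 'I_(m+m).+1 * 'I_m}|)%N by rewrite cardE muln_gt0 m0.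
  have [e0 ->] := @bigop.eq_bigmax _ (fun e : 'I_(m+m).+1 * 'I_m => (run (ra_tree (A n) i) (Tf e)).2) hpos.
  by case: (HA' e0) => H _; apply: H.
have Hlow : p * (n.+1 * m)%N%:R <= \sum_(e : 'I_(m+m).+1 * 'I_m) succ_prob (A n) (Tf e).
  rewrite -cardE mulr_natr -sumr_const; apply: ler_sum => e _; by case: (HA' e).
have Hup : \sum_(e : 'I_(m+m).+1 * 'I_m) succ_prob (A n) (Tf e) <= 2 * Q + n.+1%:R.
  have -> : \sum_(e : 'I_(m+m).+1 * 'I_m) succ_prob (A n) (Tf e) =
            \sum_(i < ra_k (A n)) W i * (#|[set e | c i e]|)%:R.
    rewrite /succ_prob.
    under eq_bigr => e _ do rewrite big_mkcond /=.
    rewrite exchange_big /=; apply: eq_bigr => i _.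
    by rewrite -sum_cond_const.
  apply: le_trans (_ : \sum_(i < ra_k (A n)) W i * (2 * Q + n.+1%:R) <= _).
    apply: ler_sum => i _; apply: ler_wpM2l; first exact: ra_w_ge0.
    apply: le_trans (_ : ((\max_(e : 'I_(m+m).+1 * 'I_m) (run (ra_tree (A n) i) (Tf e)).2).*2 + n.+1)%:R <= _).
      by rewrite ler_nat; apply: count_tree.
    by rewrite natrD -muln2 natrM mulrC lerD2r ler_wpM2l // HK.
  by rewrite -mulr_suml ra_w_sum mul1r.
have H := le_trans Hlow Hup; rewrite natrM in H.
have hy : 2 < p * m%:R.
  have : p * (2 / p) < p * m%:R by rewrite ltr_pM2l.
  by rewrite [p * (2 / p)]mulrC divfK ?gt_eqF.
move: H HQ hy; set x := n.+1%:R; set y := m%:R.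
have hx : 0 < x by rewrite ltr0n.
move=> H HQ hy.
have hxy : x * 2 < x * (p * y) by rewrite ltr_pM2l.
have : p * (x * y) <= p / 4 * y * x * 2 + x.
  apply: le_trans H _; rewrite lerD2r mulrC ler_wpM2r //.
nra.
Qed.
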